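(* Let $A=\mathbb{F}_q[t]$ and let $f_1,\ldots,f_r,g\in A$ be non-constant. Let $f$ be a polynomial function from $A/f_1A\times\cdots\times A/f_rA$ to $A/gA$. Then $f$ is represented by exactly one polynomial of the form $$F=\sum_{\mathbf{k}}b_{\mathbf{k}}(\mathbf{x})_{\mathbf{k}},$$ where the sum is over all $\mathbf{k}=(k_1,\ldots,k_r)\in\mathbb{N}^r$ with $0\le k_i<\mu(f_i,g)$ for each $i$, and the coefficients $b_{\mathbf{k}}\in A$ satisfy $b_{\mathbf{k}}=0$ or $$\deg b_{\mathbf{k}}<\deg\frac{g}{\gcd\!\Big(g,\prod_{i=1}^r\prod_{j=0}^{k_i-1}(a_{k_i}-a_j)\Big)}.$$
   Context: Write $\mathbb{F}_q=\{a_0=0,a_1,\ldots,a_{q-1}\}$. For $k\in\mathbb{N}$ with base-$q$ expansion $k=c_0+c_1q+\cdots+c_hq^h$ ($0\le c_s<q$), define $a_k=a_{c_0}+a_{c_1}t+\cdots+a_{c_h}t^h\in A$. Thus $\{a_0,\ldots,a_{q^d-1}\}$ is the set of polynomials of degree $<d$. For each $i$, $A/f_iA$ is identified with the complete residue system $\{a_0,\ldots,a_{q^{\deg f_i}-1}\}$ (polynomials of degree $<\deg f_i$). A function $f$ from $A/f_1A\times\cdots\times A/f_rA$ to $A/gA$ is a polynomial function (and $F\in A[x_1,\ldots,x_r]$ represents it) if $F(b_1,\ldots,b_r)\equiv f(b_1,\ldots,b_r)\pmod g$ for all $(b_1,\ldots,b_r)$ with $\deg b_i<\deg f_i$ (i.e.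 $b_i\in\{a_0,\ldots,a_{q^{\deg f_i}-1}\}$) for each $i$. For $\mathbf{k}\in\mathbb{N}^r$, $(\mathbf{x})_{\mathbf{k}}=\prod_{i=1}^r(x_i-a_0)(x_i-a_1)\cdots(x_i-a_{k_i-1})$ (empty product $=1$). $\lambda(g)$ is the smallest positive integer $k$ such that $g\mid\prod_{j=0}^{k-1}(a_k-a_j)$, and $\mu(f_i,g)=\min(q^{\deg f_i},\lambda(g))$. *)

(* Defs.v *)
(* A = F_q[t] is {poly F} for F : finFieldType (q = #|F|). *)
From HB Require Import structures.
From mathcomp Require Import all_boot all_order all_algebra.
Set Implicit Arguments. Unset Strict Implicit. Unset Printing Implicit Defensive.
Import GRing.Theory.
Local Open Scope ring_scope.

Section Defs.
Variable F : finFieldType.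
(* The enumeration F_q = {a_0 = 0, a_1, ..., a_(q-1)} is given by e : nat -> F,
   required (in the theorem) to satisfy e 0 = 0 and to be injective on [0, q). *)
Variable e : nat -> F.

Definition qq : nat := #|F|.

Definition pdeg (p : {poly F}) : nat := (size p).-1.

(* a_k = a_{c_0} + a_{c_1} t + ... + a_{c_h} t^h, k = sum c_s q^s;
   digits beyond h are 0 and a_0 = 0, so summing over s <= k is harmless. *)
Definition aa (k : nat) : {poly F} :=
  \sum_(s < k.+1) (e ((k %/ qq ^ s) %% qq))%:P * 'X^s.

Definition aprod (k : nat) : {poly F} := \prod_(j < k) (aa k - aa j).

(* lambda(g): the smallest positive k with g | prod_{j<k}(a_k - a_j).
   Such k exists and is <= q^(deg g) (for k = q^d, d >= deg g, the product
   is the product of all monic polynomials of degree d); we search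
   k = 1, ..., q^(size g). *)
Definition lam (g : {poly F}) : nat :=
  (find (fun k => g %| aprod k) (iota 1 (qq ^ size g))).+1.

Definition mu (fi g : {poly F}) : nat := minn (qq ^ pdeg fi) (lam g).

(* multivariate polynomial in A[x_1..x_r], as a finite list of monomial terms
   (coefficient, exponent vector) *)
Definition mpoly (r : nat) := seq ({poly F} * ('I_r -> nat)).

Definition meval (r : nat) (P : mpoly r) (x : 'I_r -> {poly F}) : {poly F} :=
  \sum_(m <- P) m.1 * \prod_(i < r) x i ^+ m.2 i.

Definition admissible (r : nat) (fs : 'I_r -> {poly F}) (x : 'I_r -> {poly F}) :=
  forall i, (size (x i) <= pdeg (fs i))%N.

Definition represents (r : nat) (fs : 'I_r -> {poly F}) (g : {poly F})
  (f : ('I_r -> {poly F}) -> {poly F}) (G : ('I_r -> {poly F}) -> {poly F}) :=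
  forall x, admissible fs x -> g %| (G x - f x).

Definition is_poly_fun (r : nat) (fs : 'I_r -> {poly F}) (g : {poly F})
  (f : ('I_r -> {poly F}) -> {poly F}) :=
  exists P : mpoly r, represents fs g f (meval P).

Definition ffact (r : nat) (k : {ffun 'I_r -> nat}) (x : 'I_r -> {poly F}) : {poly F} :=
  \prod_(i < r) \prod_(j < k i) (x i - aa j).

Definition in_range (r : nat) (fs : 'I_r -> {poly F}) (g : {poly F})
  (k : {ffun 'I_r -> nat}) : bool := [forall i, (k i < mu (fs i) g)%N].

(* the polynomial sum_k b_k (x)_k over k with 0 <= k_i < mu(f_i, g);
   since mu <= lam g we enumerate k_i in 'I_(lam g) and filter *)
Definition ffsum (r : nat) (fs : 'I_r -> {poly F}) (g : {poly F})
  (b : {ffun 'I_r -> nat} -> {poly F}) (x : 'I_r -> {poly F}) : {poly F} :=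
  \sum_(k : {ffun 'I_r -> 'I_(lam g)} | in_range fs g [ffun i => val (k i)])
     b [ffun i => val (k i)] * ffact [ffun i => val (k i)] x.

Definition coef_ok (r : nat) (g : {poly F}) (k : {ffun 'I_r -> nat}) (bk : {poly F}) : bool :=
  (bk == 0) || (pdeg bk < pdeg (g %/ gcdp g (\prod_(i < r) aprod (k i))))%N.

Definition coefs_ok (r : nat) (fs : 'I_r -> {poly F}) (g : {poly F})
  (b : {ffun 'I_r -> nat} -> {poly F}) :=
  forall k, in_range fs g k -> coef_ok g k (b k).

End Defs.

(* Main.v *)
Require Import Defs.
From HB Require Import structures.
From mathcomp Require Import all_boot all_order all_algebra.
From mathcomp Require Import ring zify.
From Stdlib Require Import Classical.
Set Implicit Arguments. Unset Strict Implicit. Unset Printing Implicit Defensive.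
Import GRing.Theory.
Local Open Scope ring_scope.

Section CountDiv.
Variable F : fieldType.

Lemma irr_factor (p : {poly F}) : (1 < size p)%N ->
  exists2 P : {poly F}, irreducible_poly P & P %| p.
Proof.
move: {2}(size p) (leqnn (size p)) => n; elim: n p => [|n IH] p hn hp.
  by move: (leq_trans hp hn).
have [hirr|hnirr] := classic (irreducible_poly p); first by exists p.
have hn' : ~ (forall q : {poly F}, size q != 1%N -> q %| p -> q %= p).
  by move=> h; apply: hnirr; apply: (pair hp h).
have [d hd] := not_all_ex_not _ _ hn'.
case: (boolP (size d == 1%N)) => [h|d1]; first by exfalso; apply: hd; rewrite h.
case: (boolP (d %| p)) => [dp|ndp]; last by exfalso; apply: hd => _; rewrite (negbTE ndp).
case: (boolP (d %= p)) => [dep|dnp]; first by exfalso; apply: hd.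
have p0 : p != 0 by rewrite -size_poly_eq0 -lt0n (ltn_trans _ hp).
have d0 : d != 0 by apply: contraNneq p0 => hd0; move: dp; rewrite hd0 dvd0p.
have hsd : (size d < size p)%N.
  rewrite ltn_neqAle dvdp_leq // andbT.
  by rewrite dvdp_size_eqp.
have hd2 : (1 < size d)%N.
  by rewrite ltn_neqAle eq_sym d1 lt0n size_poly_eq0.
have [P hP Pd] := IH d (ltnSE (leq_trans hsd hn)) hd2.
by exists P => //; exact: dvdp_trans Pd dp.
Qed.


Definition cntp n (Q : {poly F}) (al : nat -> {poly F}) :=
  (\sum_(i < n) nat_of_bool (Q %| al i)%R)%N.

Lemma cntpD1 n Q al (i1 : 'I_n) :
  cntp n Q al = (nat_of_bool (Q %| al i1)%R + \sum_(i < n | i != i1) nat_of_bool (Q %| al i)%R)%N.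
Proof. by rewrite /cntp (bigD1 i1). Qed.

Definition upd (al : nat -> {poly F}) (i1 : nat) (P : {poly F}) :=
  fun i => if i == i1 then al i %/ P else al i.

Lemma rest_upd n Q al (i1 : 'I_n) P :
  (\sum_(i < n | i != i1) nat_of_bool (Q %| upd al i1 P i)%R =
   \sum_(i < n | i != i1) nat_of_bool (Q %| al i)%R)%N.
Proof.
by apply: eq_bigr => i hi; rewrite /upd ifN.
Qed.

Lemma prod_upd n (al : nat -> {poly F}) (i1 : 'I_n) (P : {poly F}) : P %| al i1 ->
  \prod_(i < n) al i = P * \prod_(i < n) upd al i1 P i.
Proof.
move=> hP; rewrite (bigD1 i1) // [X in _ = _ * X](bigD1 i1) //= /upd eqxx.
rewrite mulrA divpKC //; congr (_ * _); apply: eq_bigr => i hi; by rewrite ifN.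
Qed.

Lemma prod_dvd1 n (al : nat -> {poly F}) :
  (forall i, (i < n)%N -> size (al i) = 1%N) -> \prod_(i < n) al i %| 1.
Proof.
move=> h; elim/big_rec: _ => [|i x _ hx]; first exact: dvdpp.
by rewrite -(mulr1 1) dvdp_mul // dvdp1 h.
Qed.

Lemma CD n (al be : nat -> {poly F}) :
  (forall i, (i < n)%N -> al i != 0) ->
  (forall (P : {poly F}) (ee : nat), irreducible_poly P ->
     (cntp n (P ^+ ee) al <= cntp n (P ^+ ee) be)%N) ->
  \prod_(i < n) al i %| \prod_(i < n) be i.
Proof.
move: {2}(\sum_(i < n) size (al i))%N (erefl (\sum_(i < n) size (al i))%N) => M.
elim/ltn_ind: M al be => M IH al be hM hal hc.
case: (boolP [forall i : 'I_n, size (al i) == 1%N]) => [/forallP hall|].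
  apply: dvdp_trans (dvd1p _); apply: prod_dvd1 => i hi.
  exact/eqP/(hall (Ordinal hi)).
move=> /forallPn [i0 hi0].
have hs0 : (1 < size (al i0))%N.
  by rewrite ltn_neqAle eq_sym hi0 lt0n size_poly_eq0 hal.
have [P hP Pd] := irr_factor hs0.
have P0 : P != 0 by exact: irredp_neq0.
have hsP : (1 < size P)%N by case: hP.
pose Pm e := [exists i : 'I_n, P ^+ e %| al i].
have ub : forall e, Pm e -> (e <= M)%N.
  move=> e /existsP [i hi].
  have hsz := dvdp_leq (hal i (ltn_ord i)) hi.
  have : (e <= (size (P ^+ e)).-1)%N.
    rewrite size_exp; rewrite -{1}(mul1n e) leq_mul2r.
    by rewrite -ltnS prednK ?hsP ?orbT // (ltn_trans _ hsP).
  move=> he; apply: (leq_trans he); rewrite -hM.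
  apply: (leq_trans (leq_pred _)); apply: (leq_trans hsz).
  by rewrite (bigD1 i) //= leq_addr.
have ex1 : exists e, Pm e by exists 1%N; apply/existsP; exists i0; rewrite expr1.
case: (ex_maxnP ex1 ub) => s /existsP [i1 hi1] smax.
have s1 : (1 <= s)%N by apply: smax; apply/existsP; exists i0; rewrite expr1.
have hPs : P %| P ^+ s by rewrite -{1}(expr1 P) dvdp_exp2l.
have Pi1 : P %| al i1 by apply: dvdp_trans hi1.
have [j1 hj1] : exists j1 : 'I_n, P ^+ s %| be j1.
  case: (boolP [exists j : 'I_n, P ^+ s %| be j]) => [/existsP //|hno].
  have hb0 : cntp n (P ^+ s) be = 0%N.
    rewrite /cntp big1 // => j _; apply/eqP; rewrite eqb0; apply/negP => hj.
    by move/negP: hno; apply; apply/existsP; exists j.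
  by have := hc P s hP; rewrite hb0 (cntpD1 _ _ i1) hi1.
have Pj1 : P %| be j1 by apply: dvdp_trans hj1.
rewrite (prod_upd Pi1) (prod_upd Pj1) dvdp_mul2l //.
have a10 : al i1 %/ P != 0.
  apply: contraTneq (hal i1 (ltn_ord i1)) => h0.
  by rewrite -(divpKC Pi1) h0 mulr0 eqxx.
have hsub : (size (al i1 %/ P)%R < size (al i1))%N.
  rewrite size_divp // ltn_subrL; apply/andP; split.
    by move: hsP; case: (size P) => [|[|k]].
  by rewrite lt0n size_poly_eq0 hal.
apply: (IH (\sum_(i < n) size (upd al i1 P i))%N) => //.
- rewrite -hM (bigD1 i1) //= [X in (_ < X)%N](bigD1 i1) //= /upd eqxx.
  rewrite (eq_bigr (fun i : 'I_n => size (al i))); last by move=> i hi; rewrite ifN.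
  by rewrite ltn_add2r.
- move=> i hi; rewrite /upd; case: ifP => [/eqP ->|_]; last exact: hal.
  exact: a10.
move=> R ee hR.
have HP := hc P ee hP.
rewrite (cntpD1 _ (upd al i1 P) i1) (cntpD1 _ (upd be j1 P) j1) !rest_upd.
rewrite /upd !eqxx.
have [cop|ncop] := boolP (coprimep R P).
  have cope : coprimep (R ^+ ee) P by exact: coprimep_expl.
  have := hc R ee hR; rewrite (cntpD1 _ al i1) (cntpD1 _ be j1).
  have gd : forall z, P %| z -> (R ^+ ee %| z %/ P) = (R ^+ ee %| z).
    by move=> z hz; rewrite -{2}(divpK hz) Gauss_dvdpl.
  by rewrite !gd.
have RP : R %= P.
  case: hP => _ hP2; apply: hP2; first by case: hR => hR1 _; rewrite neq_ltn hR1 orbT.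
  by move: ncop; rewrite irreducible_poly_coprime // negbK.
have ReP := eqp_exp ee RP.
have eqs : forall (ga : nat -> {poly F}) (k1 : 'I_n),
  (\sum_(i < n | i != k1) nat_of_bool (R ^+ ee %| ga i)%R =
   \sum_(i < n | i != k1) nat_of_bool (P ^+ ee %| ga i)%R)%N.
  by move=> ga k1; apply: eq_bigr => i _; rewrite (eqp_dvdl _ ReP).
rewrite !eqs !(eqp_dvdl _ ReP).
have sh : forall z, P %| z -> (P ^+ ee %| z %/ P) = (P ^+ ee.+1 %| z).
  by move=> z hz; rewrite -{2}(divpK hz) exprSr dvdp_mul2r.
rewrite !sh //.
move: HP; rewrite (cntpD1 _ al i1) (cntpD1 _ be j1).
case: (ltnP ee s) => hes.
  have h1 : P ^+ ee.+1 %| al i1 by apply: dvdp_trans hi1; rewrite dvdp_exp2l.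
  have h2 : P ^+ ee.+1 %| be j1 by apply: dvdp_trans hj1; rewrite dvdp_exp2l.
  have h3 : P ^+ ee %| al i1 by apply: dvdp_trans h1; rewrite dvdp_exp2l.
  have h4 : P ^+ ee %| be j1 by apply: dvdp_trans h2; rewrite dvdp_exp2l.
  by rewrite h1 h2 h3 h4.
have h1 : ~~ (P ^+ ee.+1 %| al i1).
  apply/negP => h; have : (ee.+1 <= s)%N by apply: smax; apply/existsP; exists i1.
  by rewrite ltnNge hes.
rewrite (negbTE h1) add0n.
case: (eqVneq ee s) => [->|hne].
  rewrite hi1 => h; have := leq_b1 (P ^+ s %| be j1)%R; lia.
move=> _; rewrite big1 // => i _; apply/eqP; rewrite eqb0; apply/negP => h.
have : (ee <= s)%N by apply: smax; apply/existsP; exists i.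
by move=> hh; move: hne; rewrite eqn_leq hh hes.
Qed.

End CountDiv.

Section Digits.
Variable F : finFieldType.
Variable e : nat -> F.
Hypothesis e0 : e 0%N = 0.
Hypothesis e_inj : {in gtn #|F| &, injective e}.

Local Notation q := (qq F).
Local Notation a := (aa e).

Lemma q_gt1 : (1 < q)%N.
Proof. exact: card_finNzRing_gt1. Qed.

Lemma q_gt0 : (0 < q)%N.
Proof. exact: ltn_trans q_gt1. Qed.

Definition T k (s : nat) : {poly F} := (e ((k %/ q ^ s) %% q))%:P * 'X^s.

Lemma T_big k N M : (k < q ^ N)%N -> (N <= M)%N ->
  \sum_(s < M) T k s = \sum_(s < N) T k s.
Proof.
move=> hk; elim: M => [|M IH]; first by rewrite leqn0 => /eqP ->.
rewrite leq_eqVlt => /orP [/eqP <- //| hNM].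
rewrite big_ord_recr /= IH // /T divn_small ?mod0n ?e0 ?mul0r ?addr0 //.
apply: (leq_trans hk); rewrite leq_exp2l //; exact: q_gt1.
Qed.

Lemma aa_N N k : (k < q ^ N)%N -> a k = \sum_(s < N) T k s.
Proof.
move=> hk; rewrite /aa -/q.
have hk1 : (k < q ^ k.+1)%N.
  exact: ltnW (ltn_expl k.+1 q_gt1).
rewrite -(@T_big k k.+1 (maxn N k.+1)) ?leq_maxr //.
by rewrite (@T_big k N (maxn N k.+1)) ?leq_maxl.
Qed.

Lemma aa_rec c k : (c < q)%N -> a (c + q * k) = (e c)%:P + 'X * a k.
Proof.
move=> hc.
have hk : (k < q ^ k)%N by exact: (ltn_expl k q_gt1).
have hck : (c + q * k < q ^ k.+1)%N.
  rewrite expnS; apply: (@leq_trans (q * k.+1)).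
    by rewrite mulnS ltn_add2r.
  by rewrite leq_mul2l hk orbT.
rewrite (aa_N hck) (aa_N hk) big_ord_recl /T expn0 divn1 expr0 mulr1.
rewrite addnC mulnC modnMDl (modn_small hc); congr (_ + _).
rewrite mulr_sumr; apply: eq_bigr => s _.
have -> : (lift ord0 s : nat) = s.+1 by [].
rewrite expnS divnMA divnMDl ?q_gt0 // (divn_small hc) addn0 exprS.
by rewrite mulrCA.
Qed.

Lemma aa0 : a 0 = 0.
Proof. by rewrite /aa big_ord1 div0n mod0n e0 mul0r. Qed.


Lemma aa_dec k : a k = (e (k %% q))%:P + 'X * a (k %/ q).
Proof.
rewrite -aa_rec ?ltn_pmod ?q_gt0 //.
by rewrite addnC mulnC -divn_eq.
Qed.

Lemma e_surj u : exists2 c, (c < q)%N & e c = u.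
Proof.
pose f (i : 'I_q) := e i.
have finj : injective f.
  move=> i j /e_inj; rewrite !inE => h; apply: val_inj; exact: h.
have := inj_card_onto finj; rewrite card_ord leqnn => /(_ isT u) /codomP [i ->].
by exists i.
Qed.

Lemma e_neq0 c : (0 < c < q)%N -> e c != 0.
Proof.
case/andP=> c0 cq; apply/eqP; rewrite -e0 => /e_inj.
by rewrite !inE q_gt0 cq => /(_ isT isT) h; move: c0; rewrite h.
Qed.

Lemma aa_eq0 k : a k = 0 -> k = 0%N.
Proof.
elim: k {-2}k (leqnn k) => [|n IH] k hk.
  by move: hk; rewrite leqn0 => /eqP.
rewrite aa_dec => h.
have /eqP hc : (e (k %% q))%:P == - ('X * a (k %/ q)) by rewrite -addr_eq0 h.
have h0 : e (k %% q) = 0.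
  have := congr1 (fun p : {poly F} => p`_0) hc; rewrite coefC /= coefN coefXM /=.
  by rewrite oppr0.
have hk0 : (k %% q = 0)%N.
  case: (posnP (k %% q)) => // hp; have := e_neq0 (c:=k %% q).
  by rewrite hp ltn_pmod ?q_gt0 // h0 eqxx => /(_ isT).
move: h; rewrite h0 add0r => /eqP; rewrite mulf_eq0 polyX_eq0 /= => /eqP h.
case: (posnP k) => // kp.
have : (k %/ q = 0)%N.
  apply: IH h; rewrite -ltnS; apply: leq_trans hk.
  by rewrite ltn_Pdiv ?q_gt1.
by move=> hq; rewrite (divn_eq k q) hq hk0.
Qed.

Lemma aa_inj i j : a i = a j -> i = j.
Proof.
elim: i {-2}i (leqnn i) j => [|n IH] i hi j.
  by move: hi; rewrite leqn0 => /eqP ->; rewrite aa0 => /esym /aa_eq0 ->.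
rewrite (aa_dec i) (aa_dec j) => h.
have hc : e (i %% q) = e (j %% q).
  by have := congr1 (fun p : {poly F} => p`_0) h; rewrite !coefD !coefC !coefXM /= !addr0.
have hij : (i %% q = j %% q)%N.
  by apply: e_inj; rewrite // inE ltn_pmod ?q_gt0.
move: h; rewrite hc => /addrI /(mulfI (negbT (polyX_eq0 _))) h.
case: (posnP i) => [i0|ip].
  move: h; rewrite i0 div0n aa0 => /esym /aa_eq0 hj.
  by rewrite (divn_eq j q) hj -hij i0 mod0n.
have : (i %/ q = j %/ q)%N.
  apply: IH h; rewrite -ltnS; apply: leq_trans hi.
  by rewrite ltn_Pdiv ?q_gt1.
by move=> hq; rewrite (divn_eq i q) (divn_eq j q) hq hij.
Qed.

Lemma size_XM (p : {poly F}) : (size ('X * p)%R <= (size p).+1)%N.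
Proof.
have [->|p0] := eqVneq p 0; first by rewrite mulr0 size_poly0.
by rewrite mulrC size_mulX.
Qed.

Lemma aa_size d k : (k < q ^ d)%N -> (size (a k) <= d)%N.
Proof.
elim: d k => [|d IH] k.
  by rewrite expn0 ltnS leqn0 => /eqP ->; rewrite aa0 size_poly0.
move=> hk; rewrite aa_dec; apply: (leq_trans (size_polyD _ _)).
rewrite geq_max (leq_trans (size_polyC_leq1 _)) //.
apply: (leq_trans (size_XM _)); rewrite ltnS IH //.
by rewrite ltn_divLR ?q_gt0 // -expnSr.
Qed.

Lemma aa_surj d (x : {poly F}) : (size x <= d)%N -> exists2 j, (j < q ^ d)%N & a j = x.
Proof.
elim: d x => [|d IH] x.
  by rewrite leqn0 size_poly_eq0 => /eqP ->; exists 0%N; rewrite ?aa0 ?expn0.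
move=> hx.
have hX : ('X - (0 : F)%:P) = 'X :> {poly F} by rewrite polyC0 subr0.
have hd : (size (x %/ 'X)%R <= d)%N.
  by rewrite size_divp ?polyX_eq0 // size_polyX /= leq_subLR add1n.
have [j' hj' ej'] := IH _ hd.
have [c hc ec] := e_surj x.[0].
exists (c + q * j')%N.
  rewrite expnS; apply: (@leq_trans (q * j'.+1)).
    by rewrite mulnS ltn_add2r.
  by rewrite leq_mul2l hj' orbT.
rewrite aa_rec // ej' ec.
have hm : x %% 'X = (x.[0])%:P by rewrite -hX modp_XsubC.
by rewrite [RHS](divp_eq x 'X) hm addrC mulrC.
Qed.

Lemma aa_pow d : a (q ^ d) = (e 1)%:P * 'X^d.
Proof.
elim: d => [|d IH].
  have h1 : a 1 = a (1 + q * 0) by rewrite muln0 addn0.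
  rewrite expn0 h1.
  by rewrite aa_rec ?q_gt1 // aa0 mulr0 addr0 expr0 mulr1.
have h1 : a (q ^ d.+1) = a (0 + q * q ^ d) by rewrite expnS add0n.
by rewrite h1 aa_rec ?q_gt0 // e0 add0r IH mulrCA exprS.
Qed.

Lemma aa_block m l i : (i < q ^ m)%N -> a (l * q ^ m + i) = 'X^m * a l + a i.
Proof.
elim: m i => [|m IH] i.
  by rewrite expn0 ltnS leqn0 => /eqP ->; rewrite muln1 addn0 aa0 addr0 expr0 mul1r.
move=> hi.
have hi' : (i %/ q < q ^ m)%N by rewrite ltn_divLR ?q_gt0 // -expnSr.
have -> : (l * q ^ m.+1 + i = i %% q + q * (l * q ^ m + i %/ q))%N.
  rewrite {1}(divn_eq i q) expnSr mulnDr; ring.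
rewrite aa_rec ?ltn_pmod ?q_gt0 // IH // (aa_dec i) exprS.
by rewrite mulrDr mulrA addrCA.
Qed.


Lemma block_sum (G : nat -> nat) K n :
  (\sum_(j < K * n) G j = \sum_(l < K) \sum_(i < n) G (l * n + i))%N.
Proof.
elim: K => [|K IH]; first by rewrite mul0n !big_ord0.
rewrite big_ord_recr /= -IH.
have -> : (K.+1 * n = K * n + n)%N by rewrite mulSnr.
by rewrite big_split_ord.
Qed.

Lemma sum_split (G : nat -> nat) m n :
  (\sum_(j < m + n) G j = \sum_(j < m) G j + \sum_(i < n) G (m + i))%N.
Proof. by rewrite big_split_ord. Qed.

Lemma sum_widen (G : nat -> nat) n m : (n <= m)%N ->
  (\sum_(j < n) G j <= \sum_(j < m) G j)%N.
Proof.
move=> hnm; rewrite (big_ord_widen m G hnm).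
by rewrite [X in (_ <= X)%N](bigID (fun i : 'I_m => (i < n)%N)) /= leq_addr.
Qed.

Lemma sum_le1 n (G : nat -> bool) :
  (forall i j, (i < n)%N -> (j < n)%N -> G i -> G j -> i = j) ->
  (\sum_(i < n) G i <= 1)%N.
Proof.
elim: n => [|n IH] h; first by rewrite big_ord0.
rewrite big_ord_recr /=.
case hn: (G n).
  rewrite big1 // => i _; case hi: (G i) => //.
  have hin := h i n (ltnW (ltn_ord i)) (ltnSn n) hi hn.
  by move: (ltn_ord i); rewrite hin ltnn.
rewrite addn0; apply: IH => i j hi hj; apply: h; exact: ltnW.
Qed.

Lemma addKB (u v w : {poly F}) : u + v - (u + w) = v - w.
Proof. by rewrite opprD addrACA subrr add0r. Qed.

Lemma small_dvd (Q p : {poly F}) : Q %| p -> (size p < size Q)%N -> p = 0.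
Proof.
move=> hd hs; apply/eqP; apply/negPn/negP => p0.
by have := dvdp_leq p0 hd; rewrite leqNgt hs.
Qed.

Definition cnt (Q y : {poly F}) k := (\sum_(j < k) nat_of_bool (Q %| y - a j)%R)%N.

Lemma cnt_lower (Q x : {poly F}) m k : size Q = m.+1 ->
  (k %/ q ^ m <= cnt Q x k)%N.
Proof.
move=> hQ; rewrite /cnt.
apply: (leq_trans _ (sum_widen (fun j => nat_of_bool (Q %| x - a j)) (leq_trunc_div k (q ^ m)))).
rewrite (block_sum (fun j => nat_of_bool (Q %| x - a j))).
rewrite -[X in (X <= _)%N]muln1 -[X in (X * _)%N]card_ord -sum_nat_const.
apply: leq_sum => l _.
pose y := (x - 'X^m * a l) %% Q.
have hy : (size y <= m)%N by rewrite -ltnS -hQ ltn_modp -size_poly_eq0 hQ.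
have [i0 hi0 ei0] := aa_surj hy.
rewrite (bigD1 (Ordinal hi0)) //= (aa_block _ hi0) ei0.
have -> : Q %| x - ('X^m * a l + y).
  by rewrite opprD addrA {1}(divp_eq (x - 'X^m * a l) Q) addrK dvdp_mull.
by [].
Qed.

Lemma cnt_upper (Q : {poly F}) m k : size Q = m.+1 ->
  (cnt Q (a k) k <= k %/ q ^ m)%N.
Proof.
move=> hQ; rewrite /cnt.
set K := (k %/ q ^ m)%N.
have hi0 : (k %% q ^ m < q ^ m)%N by rewrite ltn_pmod ?expn_gt0 ?q_gt0.
have hk : k = (K * q ^ m + k %% q ^ m)%N by rewrite /K -divn_eq.
have ak : a k = 'X^m * a K + a (k %% q ^ m) by rewrite {1}hk aa_block.
have := sum_split (fun j => nat_of_bool (Q %| a k - a j)) (K * q ^ m) (k %% q ^ m).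
rewrite -hk => ->.
rewrite (_ : \sum_(i < k %% q ^ m) _ = 0)%N; last first.
  rewrite big1 // => i _; apply/eqP; rewrite eqb0; apply/negP.
  have hi : (i < q ^ m)%N by apply: ltn_trans hi0.
  rewrite ak (aa_block _ hi) addKB => hd.
  have hs : (size (a (k %% q ^ m) - a i)%R < size Q)%N.
    rewrite hQ ltnS; apply: (leq_trans (size_polyD _ _)).
    by rewrite size_polyN geq_max !aa_size.
  move: (small_dvd hd hs) => /eqP; rewrite subr_eq0 => /eqP /aa_inj hik.
  by move: (ltn_ord i); rewrite -hik ltnn.
rewrite addn0 (block_sum (fun j => nat_of_bool (Q %| a k - a j))).
rewrite -[X in (_ <= X)%N]muln1 -[X in (X * _)%N]card_ord -sum_nat_const.
apply: leq_sum => l _.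
apply: (@sum_le1 _ (fun i => Q %| a k - a (l * q ^ m + i)%N)) => i j hi hj hdi hdj.
have := dvdp_sub hdj hdi.
have -> : forall u v w : {poly F}, u - v - (u - w) = w - v by move=> *; ring.
rewrite (aa_block _ hi) (aa_block _ hj) addKB.
move=> hd.
have hs : (size (a i - a j)%R < size Q)%N.
  rewrite hQ ltnS; apply: (leq_trans (size_polyD _ _)).
  by rewrite size_polyN geq_max !aa_size.
by move: (small_dvd hd hs) => /eqP; rewrite subr_eq0 => /eqP /aa_inj.
Qed.


Lemma DIV k (x : {poly F}) : aprod e k %| \prod_(j < k) (x - a j).
Proof.
apply: (@CD _ k (fun j => a k - a j) (fun j => x - a j)).
  move=> i hi; rewrite subr_eq0; apply/eqP => /aa_inj hik.
  by move: hi; rewrite -hik ltnn.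
move=> P ee hP.
have Q0 : P ^+ ee != 0 by rewrite expf_neq0 // irredp_neq0.
have hQ : size (P ^+ ee) = (size (P ^+ ee)).-1.+1.
  by rewrite prednK // lt0n size_poly_eq0.
apply: leq_trans (cnt_upper _ hQ) (cnt_lower _ _ hQ).
Qed.

End Digits.

Section Main.
Variable F : finFieldType.
Variable e : nat -> F.
Hypothesis e0 : e 0%N = 0.
Hypothesis e_inj : {in gtn #|F| &, injective e}.

Local Notation q := (qq F).
Local Notation a := (aa e).

Definition Nf (j : nat) (y : {poly F}) := \prod_(l < j) (y - a l).

Fixpoint sc (n j : nat) : {poly F} :=
  match n with
  | 0 => (j == 0%N)%:R
  | n'.+1 => (if j is j'.+1 then sc n' j' else 0) + a j * sc n' j
  end.

Lemma sc_out n j : (n < j)%N -> sc n j = 0.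
Proof.
elim: n j => [|n IH] [|j] //= hj.
by rewrite IH // IH ?mulr0 ?addr0 // ltnW.
Qed.

Lemma NfS j y : Nf j.+1 y = Nf j y * (y - a j).
Proof. by rewrite /Nf big_ord_recr. Qed.

Lemma xpow n M (y : {poly F}) : (n < M)%N ->
  y ^+ n = \sum_(j < M) sc n j * Nf j y.
Proof.
elim: n M => [|n IH] M hM.
  rewrite expr0 (bigD1 (Ordinal hM)) //= /Nf big_ord0 mulr1 big1 ?addr0 //.
  move=> j hj; have -> : (nat_of_ord j == 0%N) = false.
    by apply/negbTE; apply: contra hj => /eqP h; apply/eqP/val_inj.
  by rewrite mul0r.
have hM' : (n < M)%N by exact: ltnW.
rewrite exprS (IH M hM') mulr_sumr.
have e1 : forall j, y * (sc n j * Nf j y) = sc n j * Nf j.+1 y + a j * sc n j * Nf j y.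
  by move=> j; rewrite NfS; ring.
under eq_bigr => j _ do rewrite e1.
rewrite big_split /=.
have -> : \sum_(j < M) sc n.+1 j * Nf j y =
   \sum_(j < M) (if nat_of_ord j is j'.+1 then sc n j' else 0) * Nf j y +
   \sum_(j < M) a j * sc n j * Nf j y.
  by rewrite -big_split /=; apply: eq_bigr => j _; rewrite /= mulrDl.
congr (_ + _).
case: M hM hM' => [//|M] hM hM'.
rewrite [RHS]big_ord_recl /= mul0r add0r big_ord_recr /= sc_out // mul0r addr0.
by apply: eq_bigr.
Qed.

Definition nk N r (k : {ffun 'I_r -> 'I_N}) : {ffun 'I_r -> nat} := [ffun i => val (k i)].

Lemma ffact_nk N r (k : {ffun 'I_r -> 'I_N}) x :
  ffact e (nk k) x = \prod_(i < r) Nf (k i) (x i).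
Proof. by rewrite /ffact; apply: eq_bigr => i _; rewrite ffunE. Qed.

Definition Cf r (P : mpoly F r) M (k : {ffun 'I_r -> 'I_M}) : {poly F} :=
  \sum_(m <- P) m.1 * \prod_(i < r) sc (m.2 i) (k i).

Lemma mono_ff r (n : 'I_r -> nat) M x : (forall i, (n i < M)%N) ->
  \prod_(i < r) x i ^+ n i =
  \sum_(k : {ffun 'I_r -> 'I_M}) (\prod_(i < r) sc (n i) (k i)) * ffact e (nk k) x.
Proof.
move=> hM.
under eq_bigr => i _ do rewrite (xpow (x i) (hM i)).
rewrite bigA_distr_bigA /=; apply: eq_bigr => k _.
by rewrite big_split /= ffact_nk.
Qed.

Lemma meval_ff r (P : mpoly F r) M x :
  all (fun m : {poly F} * ('I_r -> nat) => [forall i, (m.2 i < M)%N]) P ->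
  meval P x = \sum_(k : {ffun 'I_r -> 'I_M}) Cf P k * ffact e (nk k) x.
Proof.
elim: P => [|m P IH] /=.
  by move=> _; rewrite /meval big_nil; symmetry; apply: big1 => k _; rewrite /Cf big_nil mul0r.
move=> /andP [/forallP hm hP].
rewrite /meval big_cons -/(meval P x) IH // (mono_ff x hm) mulr_sumr -big_split /=.
apply: eq_bigr => k _; rewrite /Cf big_cons mulrDl mulrA.
by [].
Qed.

Lemma bound_ex r (P : mpoly F r) :
  exists M, all (fun m : {poly F} * ('I_r -> nat) => [forall i, (m.2 i < M)%N]) P.
Proof.
elim: P => [|m P [M hM]]; first by exists 0%N.
exists (maxn M (\sum_(i < r) m.2 i).+1) => /=; apply/andP; split.
  apply/forallP => i; apply: (leq_trans _ (leq_maxr _ _)).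
  by rewrite ltnS (bigD1 i) //= leq_addr.
apply: sub_all hM => m' /forallP h; apply/forallP => i.
exact: (leq_trans (h i) (leq_maxl _ _)).
Qed.

Lemma lam_ok (g : {poly F}) : (1 < size g)%N -> g %| aprod e (lam e g).
Proof.
move=> hg.
set d := pdeg g.
have g0 : g != 0 by rewrite -size_poly_eq0 -lt0n (ltn_trans _ hg).
have hsd : size g = d.+1 by rewrite /d /pdeg prednK // (ltn_trans _ hg).
have e10 : e 1 != 0 by apply: e_neq0; rewrite // q_gt1.
set u := e 1 / lead_coef g.
have u0 : u != 0 by rewrite mulf_neq0 // invr_eq0 lead_coef_eq0.
set p := a (q ^ d) - u *: g.
have hp : (size p <= d)%N.
  have h1 : (size p <= d.+1)%N.
    apply: (leq_trans (size_polyD _ _)); rewrite size_polyN geq_max size_scale //.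
    rewrite hsd leqnn andbT aa_pow //.
    by rewrite size_Cmul // size_polyXn.
  rewrite leq_eqVlt in h1; case/orP: h1 => [/eqP hpd|//].
  have : lead_coef p = 0.
    rewrite /lead_coef hpd /= /p coefB coefZ aa_pow // coefCM coefXn eqxx mulr1.
    have -> : g`_d = lead_coef g by rewrite /lead_coef hsd.
    by rewrite /u mulfVK ?lead_coef_eq0 // subrr.
  by move/eqP; rewrite lead_coef_eq0 => /eqP p0; move: hpd; rewrite p0 size_poly0.
have [j hj ej] := aa_surj e0 e_inj hp.
have hdiv : g %| aprod e (q ^ d).
  rewrite /aprod (bigD1 (Ordinal hj)) //= ej /p opprB addrC subrK.
  by apply: dvdp_mulr; rewrite dvdpZr.
rewrite /lam.
set pr := fun k => g %| aprod e k.
have hin : has pr (iota 1 (q ^ size g)).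
  apply/hasP; exists (q ^ d)%N => //; rewrite mem_iota expn_gt0 q_gt0 /=.
  by rewrite add1n ltnS leq_exp2l ?q_gt1 // hsd.
have hf : (find pr (iota 1 (q ^ size g)) < q ^ size g)%N.
  by rewrite -{2}(size_iota 1 (q ^ size g)) -has_find.
by have := nth_find 0%N hin; rewrite nth_iota // add1n.
Qed.

Lemma prod_dvdp I (r : seq I) (P : pred I) (u v : I -> {poly F}) :
  (forall i, P i -> u i %| v i) -> \prod_(i <- r | P i) u i %| \prod_(i <- r | P i) v i.
Proof.
move=> h; apply: (big_ind2 (fun x y => x %| y)) => [|x1 x2 y1 y2 h1 h2|i hi].
- exact: dvdpp.
- exact: dvdp_mul h1 h2.
- exact: h.
Qed.

Lemma sum_dvdp I (r : seq I) (P : pred I) (u : I -> {poly F}) (g : {poly F}) :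
  (forall i, P i -> g %| u i) -> g %| \sum_(i <- r | P i) u i.
Proof.
move=> h; apply: (big_ind (fun y => g %| y)) => [|x1 x2 h1 h2|i hi].
- exact: dvdp0.
- exact: dvdp_add h1 h2.
- exact: h.
Qed.

Lemma Nf_widen m k y : (m <= k)%N -> Nf m y %| Nf k y.
Proof.
move=> hmk; rewrite /Nf -(subnKC hmk) big_split_ord /=.
exact: dvdp_mulIl.
Qed.

Lemma D_dvd r (kk : {ffun 'I_r -> nat}) x :
  \prod_(i < r) aprod e (kk i) %| ffact e kk x.
Proof. by apply: prod_dvdp => i _; exact: DIV. Qed.

Lemma out_range r (fs : 'I_r -> {poly F}) (g : {poly F}) (kk : {ffun 'I_r -> nat}) x :
  (1 < size g)%N -> admissible fs x -> ~~ in_range e fs g kk -> g %| ffact e kk x.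
Proof.
move=> hg hx /forallPn [i]; rewrite -leqNgt /mu geq_min => /orP [h1|h2].
  have [j hj ej] := aa_surj e0 e_inj (hx i).
  rewrite /ffact (bigD1 i) //= (bigD1 (Ordinal (leq_trans hj h1))) //= ej subrr.
  by rewrite !mul0r dvdp0.
rewrite /ffact (bigD1 i) //=; apply: dvdp_mulr.
apply: (dvdp_trans (lam_ok hg)); apply: (dvdp_trans (DIV e0 e_inj _ (x i))).
exact: Nf_widen h2.
Qed.

Lemma dvd_gcd (g c D : {poly F}) : g != 0 -> g %| c * D -> (g %/ gcdp g D) %| c.
Proof.
move=> g0 h.
have G0 : gcdp g D != 0 by rewrite gcdp_eq0 negb_and g0.
have hg : g = (g %/ gcdp g D) * gcdp g D by rewrite divpK // dvdp_gcdl.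
have hD : D = (D %/ gcdp g D) * gcdp g D by rewrite divpK // dvdp_gcdr.
move: h; rewrite {1}hg [X in _ %| _ * X]hD mulrA dvdp_mul2r // Gauss_dvdpl //.
by apply: coprimep_div_gcd; rewrite g0.
Qed.

Lemma gq_neq0 (g D : {poly F}) : g != 0 -> g %/ gcdp g D != 0.
Proof.
move=> g0; apply: contraNneq g0 => h.
by rewrite -(divpK (dvdp_gcdl g D)) h mul0r.
Qed.

Lemma coef_size r (g : {poly F}) (kk : {ffun 'I_r -> nat}) bk : g != 0 ->
  coef_ok e g kk bk -> (size bk < size (g %/ gcdp g (\prod_(i < r) aprod e (kk i)))%R)%N.
Proof.
move=> g0 /orP [/eqP ->|]; first by rewrite size_poly0 lt0n size_poly_eq0 gq_neq0.
rewrite /pdeg; have := gq_neq0 (\prod_(i < r) aprod e (kk i)) g0.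
rewrite -size_poly_eq0 => h0; case: (size bk) => [|n] /= h; first by rewrite lt0n.
by apply: (leq_ltn_trans h); rewrite ltn_predL lt0n.
Qed.

Lemma inr_lt r (fs : 'I_r -> {poly F}) g (kk : {ffun 'I_r -> nat}) i :
  in_range e fs g kk -> (kk i < lam e g)%N.
Proof. by move/forallP/(_ i) => h; apply: (leq_trans h); rewrite /mu geq_minr. Qed.

Lemma inr_q r (fs : 'I_r -> {poly F}) g (kk : {ffun 'I_r -> nat}) i :
  in_range e fs g kk -> (kk i < q ^ pdeg (fs i))%N.
Proof. by move/forallP/(_ i) => h; apply: (leq_trans h); rewrite /mu geq_minl. Qed.

Lemma uniq_main r (fs : 'I_r -> {poly F}) (g : {poly F}) (b b' : {ffun 'I_r -> nat} -> {poly F}) :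
  (1 < size g)%N -> coefs_ok e fs g b -> coefs_ok e fs g b' ->
  (forall x, admissible fs x -> g %| ffsum e fs g b' x - ffsum e fs g b x) ->
  forall kk, in_range e fs g kk -> b' kk = b kk.
Proof.
move=> hg hb hb' hrep.
have g0 : g != 0 by rewrite -size_poly_eq0 -lt0n (ltn_trans _ hg).
set L := lam e g.
pose c (k : {ffun 'I_r -> 'I_L}) := b' (nk k) - b (nk k).
suff H : forall k : {ffun 'I_r -> 'I_L}, in_range e fs g (nk k) -> c k = 0.
  move=> kk hk; pose k0 : {ffun 'I_r -> 'I_L} := [ffun i => Ordinal (inr_lt i hk)].
  have hk0 : nk k0 = kk by apply/ffunP => i; rewrite !ffunE.
  by have := H k0; rewrite /c hk0 => /(_ hk) /eqP; rewrite subr_eq0 => /eqP.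
move=> k; move: {2}(\sum_(i < r) (k i : nat))%N (erefl (\sum_(i < r) (k i : nat))%N) => s hs.
elim/ltn_ind: s k hs => s IH k hs hk.
pose x0 := fun i => a (nk k i).
have adm : admissible fs x0.
  by move=> i; apply: (aa_size e0); apply: (inr_q i hk).
have := hrep x0 adm.
have -> : ffsum e fs g b' x0 - ffsum e fs g b x0 =
          c k * \prod_(i < r) aprod e (nk k i).
  rewrite /ffsum -sumrB.
  rewrite (bigD1 k) //= big1 ?addr0; first by rewrite -mulrBl.
  move=> k' /andP [hk' hne]; rewrite -mulrBl.
  case: (boolP [forall i, (k' i <= k i)%N]) => [/forallP hle | /forallPn [i hi]].
    have [i0 hi0] : exists i0, (k' i0 : nat) != k i0.
      case: (boolP [exists i0, (k' i0 : nat) != k i0]) => [/existsP //|/existsPn hno].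
      have ek : k' = k by apply/ffunP => i; apply/val_inj/eqP; have := hno i; rewrite negbK.
      by move: hne; rewrite ek eqxx.
    have hlt : (\sum_(i < r) (k' i : nat) < s)%N.
      rewrite -hs (bigD1 i0) //= [X in (_ < X)%N](bigD1 i0) //=.
      have h1 : (k' i0 < k i0)%N by rewrite ltn_neqAle hi0 hle.
      have h2 : (\sum_(i < r | i != i0) (k' i : nat) <= \sum_(i < r | i != i0) (k i : nat))%N.
        by apply: leq_sum => i _; apply: hle.
      by rewrite -addSn; apply: leq_add h1 h2.
    by have := IH _ hlt k' erefl hk'; rewrite /c => ->; rewrite mul0r.
  rewrite -ltnNge in hi.
  rewrite /ffact (bigD1 i) //= ffunE (bigD1 (Ordinal hi)) //= /x0 ffunE subrr.
  by rewrite !mul0r mulr0.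
move=> hd.
have hdc := dvd_gcd g0 hd.
have hsz : (size (c k) < size (g %/ gcdp g (\prod_(i < r) aprod e (nk k i)))%R)%N.
  apply: (leq_ltn_trans (size_polyD _ _)); rewrite size_polyN gtn_max.
  by rewrite !coef_size // ?hb ?hb'.
exact: small_dvd hdc hsz.
Qed.

Lemma regroup r (fs : 'I_r -> {poly F}) (g : {poly F}) M (C : {ffun 'I_r -> 'I_M} -> {poly F}) x :
  \sum_(k : {ffun 'I_r -> 'I_M} | in_range e fs g (nk k)) C k * ffact e (nk k) x =
  \sum_(k' : {ffun 'I_r -> 'I_(lam e g)} | in_range e fs g (nk k'))
     (\sum_(k : {ffun 'I_r -> 'I_M} | nk k == nk k') C k) * ffact e (nk k') x.
Proof.
symmetry.
under eq_bigr => k' _ do rewrite mulr_suml.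
under eq_bigr => k' _ do under eq_bigr => k /eqP hk do rewrite -hk.
rewrite (exchange_big_dep (fun k => in_range e fs g (nk k))) /=; last first.
  by move=> k' k hk' /eqP ->.
apply: eq_bigr => k hk.
pose k0 : {ffun 'I_r -> 'I_(lam e g)} := [ffun i => Ordinal (inr_lt i hk)].
rewrite (big_pred1 k0) // => k' /=.
apply/andP/eqP => [[_ /eqP hkk]|->].
  apply/ffunP => i; apply/val_inj; rewrite /k0 ffunE /=.
  by have := congr1 (fun f : {ffun 'I_r -> nat} => f i) hkk; rewrite !ffunE => ->.
have hn : nk k0 = nk k by apply/ffunP => i; rewrite !ffunE.
by rewrite hn hk eqxx.
Qed.

Lemma exist_main r (fs : 'I_r -> {poly F}) (g : {poly F}) (P : mpoly F r) :
  (1 < size g)%N -> exists b, coefs_ok e fs g b /\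
    forall x, admissible fs x -> g %| ffsum e fs g b x - meval P x.
Proof.
move=> hg.
have g0 : g != 0 by rewrite -size_poly_eq0 -lt0n (ltn_trans _ hg).
have [M hM] := bound_ex P.
pose S (kk : {ffun 'I_r -> nat}) := \sum_(k : {ffun 'I_r -> 'I_M} | nk k == kk) Cf P k.
pose gq (kk : {ffun 'I_r -> nat}) := g %/ gcdp g (\prod_(i < r) aprod e (kk i)).
exists (fun kk => S kk %% gq kk); split.
  move=> kk _; rewrite /coef_ok; case: eqP => //= hne; rewrite /pdeg.
  have hs : (size (S kk %% gq kk)%R < size (gq kk))%N by rewrite ltn_modp gq_neq0.
  have hs0 : (0 < size (S kk %% gq kk)%R)%N by rewrite lt0n size_poly_eq0; apply/eqP.
  by rewrite -ltnS prednK // (leq_trans hs) // -ltnS prednK // (ltn_trans _ hs).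
move=> x hx.
rewrite (meval_ff x hM) (bigID (fun k => in_range e fs g (nk k))) /= regroup.
rewrite opprD addrA; apply: dvdp_sub.
  rewrite /ffsum -sumrB; apply: sum_dvdp => k' hk'.
  rewrite -mulrBl.
  set kk := [ffun i => val (k' i)].
  have -> : S kk %% gq kk - S kk = - (S kk %/ gq kk * gq kk).
    by rewrite {2}(divp_eq (S kk) (gq kk)) opprD addrCA subrr addr0.
  rewrite mulNr dvdpNr -mulrA; apply: dvdp_mull.
  apply: (dvdp_trans (_ : g %| gq kk * \prod_(i < r) aprod e (kk i))).
    rewrite -{1}(divpK (dvdp_gcdl g (\prod_(i < r) aprod e (kk i)))).
    by apply: dvdp_mul => //; exact: dvdp_gcdr.
  by apply: dvdp_mul => //; exact: D_dvd.
apply: sum_dvdp => k hk; apply: dvdp_mull.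
exact: out_range.
Qed.

End Main.

Theorem mainTheorem7 (F : finFieldType) (e : nat -> F)
  (e0 : e 0%N = 0) (e_inj : {in gtn #|F| &, injective e})
  (r : nat) (fs : 'I_r -> {poly F}) (g : {poly F})
  (fs_nc : forall i, (1 < size (fs i))%N) (g_nc : (1 < size g)%N)
  (f : ('I_r -> {poly F}) -> {poly F})
  (f_poly : is_poly_fun fs g f) :
  exists b : {ffun 'I_r -> nat} -> {poly F},
    [/\ coefs_ok e fs g b,
        represents fs g f (ffsum e fs g b) &
        forall b' : {ffun 'I_r -> nat} -> {poly F},
          coefs_ok e fs g b' -> represents fs g f (ffsum e fs g b') ->
          forall k, in_range e fs g k -> b' k = b k].
Proof.
case: f_poly => P hP.
have [b [hb hrep]] := exist_main e0 e_inj fs P g_nc.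
have hr : represents fs g f (ffsum e fs g b).
  move=> x hx.
  have -> : ffsum e fs g b x - f x = (ffsum e fs g b x - meval P x) + (meval P x - f x).
    by rewrite addrA subrK.
  by apply: dvdp_add; [exact: hrep | exact: hP].
exists b; split => // b' hb' hr' k hk.
apply: (uniq_main e0 g_nc hb hb' _ hk) => x hx.
have -> : ffsum e fs g b' x - ffsum e fs g b x =
  (ffsum e fs g b' x - f x) - (ffsum e fs g b x - f x).
  by rewrite opprB addrA subrK.
by apply: dvdp_sub; [exact: hr' | exact: hr].
Qed.
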